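(* (i) Let $p, m, r \in \mathbb N$. Then \begin{align*} S(p,m,1,r,1) &=\sum_{i=1}^{m}\frac{(-1)^{m-i}}{r^{m-i+1}}S_{p,i}^{+,-}+\frac{(-1)^{m+r}}{r^{m}}S_{p,1}^{+,-} +\frac{(-1)^{m+r-1}}{r^{m}}\overline{\zeta}(p+1)\\ &\quad +\frac{(-1)^{m}}{r^{m}}\left(\sum_{j=1}^{p}(-1)^{p-j+r}\overline{\zeta}(j)\overline{H}_{r-1}^{(p-j+1)} +(-1)^{p+r-1}\overline{\zeta}(1)H_{r-1}^{(p)}\right) +\frac{(-1)^{m+p+r}}{r^{m}}\sum_{n=1}^{r-1}\frac{\overline{H}_{n}}{n^{p}}\,. \end{align*} (ii) Let $m, r \in \mathbb N$, $p \in \mathbb N_{0}$ with $m \geq p+1$. Then \begin{align*} S(-p,m,1,r,1) =\frac{1}{p+1}\sum_{\ell=0}^{p} \binom{p+1}{\ell}B_{\ell}^{+} \left(\sum_{i=1}^{m-p-1+\ell}\frac{(-1)^{m-p-1+\ell-i}}{r^{m-p+\ell-i}}\overline{\zeta}(i) +\frac{(-1)^{m-p-1+\ell+r}}{r^{m-p-1+\ell}}(\overline{\zeta}(1)-\overline{H}_{r})\right)\,. \end{align*}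
   Context: $H_n^{(q)}=\sum_{j=1}^n j^{-q}$ for $q\in\mathbb N$; for an integer $q\ge0$, $H_n^{(-q)}=\sum_{\ell=1}^n\ell^q$. $\overline{H}_n^{(q)}=\sum_{j=1}^n (-1)^{j-1}j^{-q}$, $\overline{H}_n=\overline{H}_n^{(1)}$; these are $0$ for $n=0$. $\overline{\zeta}(s)=\sum_{n\ge1}(-1)^{n-1}n^{-s}$, $\overline{\zeta}(1)=\log 2$. For $q\in\mathbb Z$ and $m,t,r\in\mathbb N$, $S(q,m,t,r,1):=\sum_{n=1}^\infty\frac{(-1)^{n+1}H_n^{(q)}}{n^{m}(n+r)^{t}}$. $S_{p,q}^{+,-}:=\sum_{n=1}^\infty (-1)^{n-1}H_n^{(p)}/n^q$. Bernoulli numbers $B_j^{+}$: $\frac{x}{1-e^{-x}}=\sum_{j\ge0}B_j^{+}\frac{x^j}{j!}$. Empty sums are $0$. *)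

(* Defs.v *)
From Stdlib Require Import Reals ZArith List.
From Coquelicot Require Import Coquelicot.
Open Scope R_scope.

Fixpoint sum1 (n : nat) (f : nat -> R) : R :=
  match n with
  | O => 0
  | S k => sum1 k f + f (S k)
  end.

Definition Hgen (q : Z) (n : nat) : R :=
  sum1 n (fun j => powerRZ (INR j) (- q)).

Definition Hbar (q : nat) (n : nat) : R :=
  sum1 n (fun j => (-1) ^ (j + 1) / (INR j) ^ q).

(* \overline{\zeta}(s) = sum_{n>=1} (-1)^{n-1} n^{-s} (series indexed from n-1 = 0) *)
Definition zetabar (s : nat) : R :=
  Series (fun k => (-1) ^ k / (INR (S k)) ^ s).

Definition Spm (p q : nat) : R :=
  Series (fun k => (-1) ^ k * Hgen (Z.of_nat p) (S k) / (INR (S k)) ^ q).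

(* general term (index k = n-1) of S(q,m,t,r,1) =
   sum_{n>=1} (-1)^{n+1} H_n^{(q)} / (n^m (n+r)^t) *)
Definition S_term (q : Z) (m t r : nat) (k : nat) : R :=
  (-1) ^ k * Hgen q (S k) / ((INR (S k)) ^ m * (INR (S k + r)) ^ t).

Definition S5 (q : Z) (m t r : nat) : R := Series (S_term q m t r).

(* Bernoulli numbers B_j^+ (x/(1-e^{-x}) = sum B_j^+ x^j/j!), via the
   equivalent standard recurrence sum_{k=0}^{n} C(n+1,k) B_k^+ = n+1. *)
Fixpoint bernp_list (n : nat) : list R :=
  match n with
  | O => 1 :: nil
  | S k => let l := bernp_list k in
           l ++ (1 - / INR (k + 2) *
                 sum_f_R0 (fun i => Binomial.C (k + 2) i * nth i l 0) k) :: nil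
  end.

Definition bernp (j : nat) : R := nth j (bernp_list j) 0.

(* Main.v *)
Require Import Defs.
From Stdlib Require Import Reals ZArith List Lra Lia.
From Coquelicot Require Import Coquelicot.
Open Scope R_scope.


Lemma iss_plus (a b : nat -> R) (la lb : R) : is_series a la -> is_series b lb ->
  is_series (fun n => a n + b n) (la + lb).
Proof. intros; now apply (is_series_plus a b). Qed.

Lemma iss_minus (a b : nat -> R) (la lb : R) : is_series a la -> is_series b lb ->
  is_series (fun n => a n - b n) (la - lb).
Proof. intros; now apply (is_series_minus a b). Qed.

Lemma iss_scal (c : R) (a : nat -> R) (l : R) : is_series a l -> is_series (fun n => c * a n) (c * l).
Proof. intros; now apply (is_series_scal c a). Qed.

Lemma iss_opp (a : nat -> R) (l : R) : is_series a l -> is_series (fun n => - a n) (- l).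
Proof. intros; now apply (is_series_opp a). Qed.

Lemma iss_zero : is_series (fun _ => 0) 0.
Proof.
  unfold is_series. apply (is_lim_seq_ext (fun _ => 0) (sum_n (fun _ : nat => 0)) 0).
  intros n. rewrite sum_n_Reals, sum_cte. simpl; ring.
  apply is_lim_seq_const.
Qed.

Lemma iss_shift (a : nat -> R) (l : R) : is_series a l -> is_series (fun k => a (S k)) (l - a 0%nat).
Proof.
  intros H. apply (is_series_incr_1 a).
  assert (E : l - a 0%nat + a 0%nat = l) by ring.
  unfold plus; simpl. rewrite E. exact H.
Qed.

Lemma sum1_ext n f g : (forall i, (1 <= i <= n)%nat -> f i = g i) -> sum1 n f = sum1 n g.
Proof.
  induction n; intros H; simpl; auto.
  rewrite IHn by (intros; apply H; lia). rewrite (H (S n)) by lia. reflexivity.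
Qed.

Lemma sum1_plus n f g : sum1 n (fun i => f i + g i) = sum1 n f + sum1 n g.
Proof. induction n; simpl; [ring| rewrite IHn; ring]. Qed.

Lemma sum1_scal n c f : sum1 n (fun i => c * f i) = c * sum1 n f.
Proof. induction n; simpl; [ring| rewrite IHn; ring]. Qed.

Lemma sum1_zero n : sum1 n (fun _ => 0) = 0.
Proof. induction n; simpl; [ring| rewrite IHn; ring]. Qed.

Lemma iss_sum1 n (a : nat -> nat -> R) (l : nat -> R) :
  (forall i, (1 <= i <= n)%nat -> is_series (a i) (l i)) ->
  is_series (fun k => sum1 n (fun i => a i k)) (sum1 n l).
Proof.
  induction n; intros H; simpl.
  - apply iss_zero.
  - apply iss_plus. apply IHn; intros; apply H; lia. apply H; lia.
Qed.

Lemma iss_sumf n (a : nat -> nat -> R) (l : nat -> R) :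
  (forall i, (i <= n)%nat -> is_series (a i) (l i)) ->
  is_series (fun k => sum_f_R0 (fun i => a i k) n) (sum_f_R0 l n).
Proof.
  induction n; intros H; simpl.
  - apply H; lia.
  - apply iss_plus. apply IHn; intros; apply H; lia. apply H; lia.
Qed.

Lemma ex_alt (a : nat -> R) : (forall n, a (S n) <= a n) -> is_lim_seq a 0 ->
  ex_series (fun k => (-1) ^ k * a k).
Proof.
  intros Hd Hl.
  destruct (alternated_series a) as [l Hs].
  - intro n; apply Hd.
  - apply is_lim_seq_Reals; exact Hl.
  - exists l. unfold is_series.
    apply (is_lim_seq_ext (fun N => sum_f_R0 (tg_alt a) N) (sum_n (fun k => (-1) ^ k * a k)) l).
    + intros N. rewrite <- sum_n_Reals. apply sum_n_ext. intros; unfold tg_alt; reflexivity.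
    + apply is_lim_seq_Reals; exact Hs.
Qed.

Lemma lim_invS : is_lim_seq (fun k => / INR (S k)) 0.
Proof.
  apply (is_lim_seq_incr_1 (fun k => / INR k)).
  replace (Finite 0) with (Rbar_inv p_infty) by reflexivity.
  apply is_lim_seq_inv. apply is_lim_seq_INR. discriminate.
Qed.

Lemma INRS_ge1 k : 1 <= INR (S k).
Proof. rewrite S_INR. pose proof (pos_INR k). lra. Qed.

Lemma pow_ge_self x s : 1 <= x -> (1 <= s)%nat -> x <= x ^ s.
Proof.
  intros Hx Hs. destruct s as [|s]; [lia|]. simpl.
  rewrite <- (Rmult_1_r x) at 1. apply Rmult_le_compat_l; [lra|].
  apply pow_R1_Rle; lra.
Qed.

Lemma pow_pos_ge1 x s : 1 <= x -> 1 <= x ^ s.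
Proof. intros; apply pow_R1_Rle; lra. Qed.

Lemma zb_series s : (1 <= s)%nat -> is_series (fun k => (-1) ^ k / INR (S k) ^ s) (zetabar s).
Proof.
  intros Hs. unfold zetabar. apply Series_correct.
  apply (ex_series_ext (fun k => (-1) ^ k * / INR (S k) ^ s)). intros; reflexivity.
  apply ex_alt.
  - intros n. apply Rinv_le_contravar. pose proof (pow_pos_ge1 (INR (S n)) s (INRS_ge1 n)); lra.
    apply pow_incr. split. pose proof (INRS_ge1 n); lra. rewrite !S_INR; lra.
  - apply (is_lim_seq_le_le (fun _ => 0) _ (fun k => / INR (S k))).
    + intros n. pose proof (INRS_ge1 n). split.
      * apply Rlt_le, Rinv_0_lt_compat. pose proof (pow_pos_ge1 (INR (S n)) s H); lra.
      * apply Rinv_le_contravar. lra. apply pow_ge_self; auto.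
    + apply is_lim_seq_const.
    + apply lim_invS.
Qed.

Lemma sum1_S n f : sum1 (S n) f = sum1 n f + f (S n).
Proof. reflexivity. Qed.

Lemma pow_S' x n : x ^ (S n) = x * x ^ n.
Proof. reflexivity. Qed.

Lemma m1sq n : (-1) ^ n * (-1) ^ n = 1.
Proof. rewrite <- pow_add, <- (Nat.mul_1_r n) at 1. replace (n * 1 + n)%nat with (2 * n)%nat by lia.
  rewrite pow_mult. replace ((-1)^2) with 1 by ring. apply pow1. Qed.

Lemma m1_cases n : (-1) ^ n = 1 \/ (-1) ^ n = -1.
Proof. induction n; simpl; [left; ring|]. destruct IHn as [H|H]; rewrite H; [right|left]; ring. Qed.

Lemma sum1_opp n f : sum1 n (fun i => - f i) = - sum1 n f.
Proof. induction n; simpl; [ring| rewrite IHn; ring]. Qed.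

Lemma exs_ext (a b : nat -> R) : (forall n, a n = b n) -> ex_series a -> ex_series b.
Proof. apply ex_series_ext. Qed.


Lemma pf M x s : 0 < x -> 0 < s ->
  / (x ^ M * (x + s)) =
  sum1 M (fun i => (-1) ^ (M - i) / s ^ (M - i + 1) * / x ^ i) + (-1) ^ M / s ^ M * / (x + s).
Proof.
  intros Hx Hs. induction M.
  - simpl. field. lra.
  - rewrite sum1_S.
    rewrite (sum1_ext M _ (fun i => - / s * ((-1) ^ (M - i) / s ^ (M - i + 1) * / x ^ i))).
    2:{ intros i Hi. replace (S M - i)%nat with (S (M - i)) by lia. rewrite !pow_add, !pow_1. simpl. field.
        repeat split; try lra; apply pow_nonzero; lra. }
    rewrite sum1_scal.
    assert (E : sum1 M (fun i => (-1) ^ (M - i) / s ^ (M - i + 1) * / x ^ i) =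
                / (x ^ M * (x + s)) - (-1) ^ M / s ^ M * / (x + s)) by (rewrite IHM; ring).
    rewrite E. replace (S M - S M)%nat with 0%nat by lia. simpl.
    field. repeat split; try lra. apply pow_nonzero; lra. apply pow_nonzero; lra.
Qed.

Lemma iss_ext (a b : nat -> R) (l : R) : (forall n, a n = b n) -> is_series a l -> is_series b l.
Proof. apply is_series_ext. Qed.

Lemma iss_eq (a : nat -> R) (l l' : R) : is_series a l -> l = l' -> is_series a l'.
Proof. intros H E; subst; exact H. Qed.

Lemma INRS_pos k : 0 < INR (S k).
Proof. apply lt_0_INR; lia. Qed.

Lemma Vser r : is_series (fun k => (-1) ^ k / INR (S k + r)) ((-1) ^ r * (zetabar 1 - Hbar 1 r)).
Proof.
  induction r.
  - apply (iss_ext (fun k => (-1) ^ k / INR (S k) ^ 1)).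
    + intros k. rewrite Nat.add_0_r, pow_1. reflexivity.
    + eapply iss_eq. apply zb_series; lia. unfold Hbar; simpl; ring.
  - apply (iss_ext (fun k => - ((-1) ^ (S k) / INR (S (S k) + r)))).
    + intros k. replace (S k + S r)%nat with (S (S k) + r)%nat by lia. simpl pow. field.
      apply not_0_INR; lia.
    + eapply iss_eq. apply iss_opp. apply (iss_shift (fun k => (-1) ^ k / INR (S k + r))). exact IHr.
      unfold Hbar. rewrite sum1_S, !pow_add, pow_1, !pow_S', pow_O.
      replace (S 0 + r)%nat with (S r) by lia.
      set (z := zetabar 1). set (h := sum1 r _). set (y := (-1)^r). rewrite pow_O. replace (1 / INR (S r)) with (y * y / INR (S r)) by (unfold y; rewrite m1sq; reflexivity). field. apply not_0_INR; lia.
Qed.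

Lemma Gser M s : (1 <= s)%nat ->
  is_series (fun k => (-1) ^ k / (INR (S k) ^ M * INR (S k + s)))
   (sum1 M (fun i => (-1) ^ (M - i) / INR s ^ (M - i + 1) * zetabar i)
    + (-1) ^ M / INR s ^ M * ((-1) ^ s * (zetabar 1 - Hbar 1 s))).
Proof.
  intros Hs.
  assert (Hs' : 0 < INR s) by (apply lt_0_INR; lia).
  apply (iss_ext (fun k =>
      sum1 M (fun i => (-1) ^ (M - i) / INR s ^ (M - i + 1) * ((-1) ^ k / INR (S k) ^ i))
      + (-1) ^ M / INR s ^ M * ((-1) ^ k / INR (S k + s)))).
  - intros k. rewrite plus_INR.
    replace ((-1) ^ k / (INR (S k) ^ M * (INR (S k) + INR s)))
      with ((-1) ^ k * / (INR (S k) ^ M * (INR (S k) + INR s))) by reflexivity.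
    rewrite (pf M (INR (S k)) (INR s) (INRS_pos k) Hs').
    rewrite Rmult_plus_distr_l, <- sum1_scal. f_equal.
    + apply sum1_ext; intros; unfold Rdiv; ring.
    + unfold Rdiv; ring.
  - apply iss_plus.
    + apply iss_sum1. intros i Hi. apply iss_scal. apply zb_series; lia.
    + apply iss_scal. apply Vser.
Qed.


Lemma hp_S p n : Hgen (Z.of_nat p) (S n) = Hgen (Z.of_nat p) n + / INR (S n) ^ p.
Proof. unfold Hgen. rewrite sum1_S, powerRZ_neg', <- pow_powerRZ. reflexivity. Qed.

Lemma hp_0 p : Hgen (Z.of_nat p) 0 = 0.
Proof. reflexivity. Qed.

Lemma hp_1 p : Hgen (Z.of_nat p) 1 = 1.
Proof. rewrite hp_S, hp_0. simpl INR. rewrite pow1. field. Qed.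

Lemma hp_nonneg p n : 0 <= Hgen (Z.of_nat p) n.
Proof.
  induction n. rewrite hp_0; lra. rewrite hp_S.
  pose proof (pow_lt (INR (S n)) p (INRS_pos n)). pose proof (Rinv_0_lt_compat _ H). lra.
Qed.

Lemma hp_ge1 p n : 1 <= Hgen (Z.of_nat p) (S n).
Proof.
  induction n. rewrite hp_1; lra. rewrite hp_S.
  pose proof (pow_lt (INR (S (S n))) p (INRS_pos (S n))). pose proof (Rinv_0_lt_compat _ H). lra.
Qed.

Lemma hp_le p k : (1 <= p)%nat -> Hgen (Z.of_nat p) (S k) <= sum_f_R0 (fun j => / INR (S j)) k.
Proof.
  intros Hp. induction k.
  - rewrite hp_1. simpl. rewrite Rinv_1; lra.
  - rewrite hp_S, tech5. apply Rplus_le_compat; auto.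
    apply Rinv_le_contravar. apply INRS_pos. apply pow_ge_self; auto. apply INRS_ge1.
Qed.

Lemma lim_H_over_n p : (1 <= p)%nat ->
  is_lim_seq (fun k => Hgen (Z.of_nat p) (S k) / INR (S k)) 0.
Proof.
  intros Hp.
  assert (HC : is_lim_seq (fun k => sum_f_R0 (fun j => / INR (S j)) k / INR (S k)) 0).
  { apply (is_lim_seq_incr_1 (fun n => sum_f_R0 (fun j => / INR (S j)) (Init.Nat.pred n) / INR n)).
    apply is_lim_seq_Reals. apply Cesaro_1. apply is_lim_seq_Reals. apply lim_invS. }
  refine (is_lim_seq_le_le (fun _ => 0) _ _ _ _ (is_lim_seq_const 0) HC).
  intros n. pose proof (INRS_pos n). split.
  - apply Rmult_le_pos. apply hp_nonneg. apply Rlt_le, Rinv_0_lt_compat; lra.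
  - apply Rmult_le_compat_r. apply Rlt_le, Rinv_0_lt_compat; lra. apply hp_le; auto.
Qed.

Lemma Spm_series p q : (1 <= p)%nat -> (1 <= q)%nat ->
  is_series (fun k => (-1) ^ k * Hgen (Z.of_nat p) (S k) / INR (S k) ^ q) (Spm p q).
Proof.
  intros Hp Hq. unfold Spm. apply Series_correct.
  apply (exs_ext (fun k => (-1) ^ k * (Hgen (Z.of_nat p) (S k) / INR (S k) ^ q))).
  { intros; unfold Rdiv; ring. }
  destruct q as [|q]; [lia|].
  apply ex_alt.
  - intros n.
    set (h := Hgen (Z.of_nat p) (S n)). set (x := INR (S n)).
    rewrite hp_S. fold h. replace (INR (S (S n))) with (x + 1) by (unfold x; rewrite (S_INR (S n)); reflexivity).
    assert (Hx : 1 <= x) by apply INRS_ge1.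
    assert (Hh : 1 <= h) by apply hp_ge1.
    assert (Ht : / (x + 1) ^ p <= / (x + 1)).
    { apply Rinv_le_contravar; [lra|]. apply pow_ge_self; auto; lra. }
    assert (Ht0 : 0 < / (x + 1) ^ p) by (apply Rinv_0_lt_compat, pow_lt; lra).
    rewrite !pow_S'.
    replace ((h + / (x + 1) ^ p) / ((x + 1) * (x + 1) ^ q))
      with (((h + / (x + 1) ^ p) / (x + 1)) * / (x + 1) ^ q)
      by (field; repeat split; try apply pow_nonzero; lra).
    replace (h / (x * x ^ q)) with ((h / x) * / x ^ q)
      by (field; repeat split; try apply pow_nonzero; lra).
    apply Rmult_le_compat.
    + apply Rmult_le_pos; [lra|]. apply Rlt_le, Rinv_0_lt_compat; lra.
    + apply Rlt_le, Rinv_0_lt_compat, pow_lt; lra.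
    + set (t := / (x + 1) ^ p) in *.
      apply (Rmult_le_reg_r (x * (x + 1))). nra.
      replace ((h + t) / (x + 1) * (x * (x + 1))) with ((h + t) * x) by (field; lra).
      replace (h / x * (x * (x + 1))) with (h * (x + 1)) by (field; lra).
      assert (t * (x + 1) <= 1).
      { unfold t. apply (Rmult_le_reg_r (/ (x + 1))). apply Rinv_0_lt_compat; lra.
        replace (/ (x + 1) ^ p * (x + 1) * / (x + 1)) with (/ (x + 1) ^ p) by (field; repeat split; try apply pow_nonzero; lra).
        fold t; lra. }
      nra.
    + apply Rinv_le_contravar. apply pow_lt; lra. apply pow_incr; lra.
  - apply (is_lim_seq_le_le (fun _ => 0) _ (fun k => Hgen (Z.of_nat p) (S k) / INR (S k)));
      [|apply is_lim_seq_const|apply lim_H_over_n; auto].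
    intros n. pose proof (INRS_pos n). pose proof (INRS_ge1 n). pose proof (hp_nonneg p (S n)).
    assert (1 <= INR (S n) ^ q) by (apply pow_pos_ge1; lra).
    split.
    + apply Rmult_le_pos; auto. apply Rlt_le, Rinv_0_lt_compat. rewrite pow_S'. nra.
    + apply Rmult_le_compat_l; auto. apply Rinv_le_contravar; auto. rewrite pow_S'. nra.
Qed.


Definition uu p r k := (-1) ^ k * Hgen (Z.of_nat p) (S k) / INR (S k + r).
Definition ww p r k := (-1) ^ k / (INR (S k) ^ p * INR (S k + r)).

Lemma Ustep p r (A B : R) : is_series (uu p r) A -> is_series (ww p r) B ->
  is_series (uu p (S r)) (B - A).
Proof.
  intros HA HB.
  apply (iss_ext (fun k => ww p r (S k) - uu p r (S k))).
  - intros k. unfold ww, uu. rewrite (hp_S p (S k)).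
    replace (S k + S r)%nat with (S (S k) + r)%nat by lia.
    rewrite !pow_S'. field. split. apply not_0_INR; lia. apply pow_nonzero, not_0_INR; lia.
  - eapply iss_eq. apply iss_minus; apply iss_shift; eassumption.
    unfold ww, uu. rewrite hp_1. rewrite pow1. simpl pow. field. apply not_0_INR; lia.
Qed.

Definition Uc p r' :=
  (-1) ^ (S r') * Spm p 1 + (-1) ^ r' * zetabar (p + 1)
  + (sum1 p (fun j => (-1) ^ (p - j + S r') * zetabar j * Hbar (p - j + 1) r')
     + (-1) ^ (p + r') * zetabar 1 * Hgen (Z.of_nat p) r')
  + (-1) ^ (p + S r') * sum1 r' (fun n => Hbar 1 n / INR n ^ p).

Lemma Useries p : (1 <= p)%nat -> forall r', is_series (uu p (S r')) (Uc p r').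
Proof.
  intros Hp. induction r'.
  - eapply iss_eq. apply Ustep.
    + apply (iss_ext (fun k => (-1) ^ k * Hgen (Z.of_nat p) (S k) / INR (S k) ^ 1)).
      intros k. unfold uu. rewrite pow_1, Nat.add_0_r. reflexivity.
      apply Spm_series; lia.
    + apply (iss_ext (fun k => (-1) ^ k / INR (S k) ^ (p + 1))).
      intros k. unfold ww. rewrite pow_add, pow_1, Nat.add_0_r. reflexivity.
      apply zb_series; lia.
    + unfold Uc. rewrite (sum1_ext p _ (fun _ => 0)) by (intros; unfold Hbar; simpl sum1; ring).
      rewrite sum1_zero, hp_0. simpl sum1. simpl pow. ring.
  - eapply iss_eq. apply Ustep. exact IHr'. apply (Gser p (S r')); lia.
    unfold Uc.
    rewrite (sum1_ext p (fun j => (-1) ^ (p - j + S (S r')) * zetabar j * Hbar (p - j + 1) (S r'))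
       (fun j => - ((-1) ^ (p - j + S r') * zetabar j * Hbar (p - j + 1) r')
                 + (-1) ^ (p - j) / INR (S r') ^ (p - j + 1) * zetabar j)).
    2:{ intros j Hj. unfold Hbar. rewrite sum1_S. rewrite !pow_add, !pow_S', ?pow_1, ?pow_O.
        destruct (m1_cases r') as [E|E]; rewrite E; field;
        split; try apply pow_nonzero; apply not_0_INR; lia. }
    rewrite sum1_plus, sum1_opp.
    rewrite (sum1_S r' (fun n => Hbar 1 n / INR n ^ p)).
    rewrite hp_S.
    rewrite !pow_add, !pow_S', ?pow_1, ?pow_O.
    destruct (m1_cases r') as [E|E]; rewrite E; field; apply pow_nonzero, not_0_INR; lia.
Qed.

Lemma part1 (p m r : nat) : (1 <= p)%nat -> (1 <= m)%nat -> (1 <= r)%nat ->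
    is_series (S_term (Z.of_nat p) m 1 r)
      (sum1 m (fun i => (-1) ^ (m - i) / (INR r) ^ (m - i + 1) * Spm p i)
       + (-1) ^ (m + r) / (INR r) ^ m * Spm p 1
       + (-1) ^ (m + r - 1) / (INR r) ^ m * zetabar (p + 1)
       + (-1) ^ m / (INR r) ^ m *
           (sum1 p (fun j => (-1) ^ (p - j + r) * zetabar j * Hbar (p - j + 1) (r - 1))
            + (-1) ^ (p + r - 1) * zetabar 1 * Hgen (Z.of_nat p) (r - 1))
       + (-1) ^ (m + p + r) / (INR r) ^ m *
           sum1 (r - 1) (fun n => Hbar 1 n / (INR n) ^ p)).
Proof.
  intros Hp Hm Hr.
  destruct r as [|r']; [lia|].
  assert (Hs' : 0 < INR (S r')) by apply INRS_pos.
  apply (iss_ext (fun k =>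
      sum1 m (fun i => (-1) ^ (m - i) / INR (S r') ^ (m - i + 1) *
                        ((-1) ^ k * Hgen (Z.of_nat p) (S k) / INR (S k) ^ i))
      + (-1) ^ m / INR (S r') ^ m * uu p (S r') k)).
  - intros k. unfold S_term, uu. rewrite pow_1.
    replace ((-1) ^ k * Hgen (Z.of_nat p) (S k) / (INR (S k) ^ m * INR (S k + S r')))
      with ((-1) ^ k * Hgen (Z.of_nat p) (S k) * / (INR (S k) ^ m * (INR (S k) + INR (S r'))))
      by (rewrite plus_INR; reflexivity).
    rewrite (pf m (INR (S k)) (INR (S r')) (INRS_pos k) Hs').
    rewrite Rmult_plus_distr_l, <- sum1_scal. f_equal.
    + apply sum1_ext; intros; unfold Rdiv; ring.
    + rewrite plus_INR. unfold Rdiv; ring.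
  - eapply iss_eq. apply iss_plus.
    + apply iss_sum1. intros i Hi. apply iss_scal. apply Spm_series; lia.
    + apply iss_scal. apply Useries; auto.
    + unfold Uc.
      replace (S r' - 1)%nat with r' by lia.
      replace (m + S r' - 1)%nat with (m + r')%nat by lia.
      replace (p + S r' - 1)%nat with (p + r')%nat by lia.
      rewrite !pow_add, !pow_S'. field. apply pow_nonzero; lra.
Qed.


Lemma bl_len n : length (bernp_list n) = S n.
Proof. induction n; simpl; auto. rewrite length_app, IHn. simpl. lia. Qed.

Lemma bl_prefix i n : (i <= n)%nat -> nth i (bernp_list (S n)) 0 = nth i (bernp_list n) 0.
Proof. intros H. simpl. apply app_nth1. rewrite bl_len. lia. Qed.

Lemma bl_nth n i : (i <= n)%nat -> nth i (bernp_list n) 0 = bernp i.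
Proof.
  induction n; intros H.
  - replace i with 0%nat by lia. reflexivity.
  - destruct (Nat.eq_dec i (S n)) as [->|Hne]; [reflexivity|].
    rewrite bl_prefix by lia. apply IHn; lia.
Qed.

Lemma bernp_S k : bernp (S k) =
  1 - / INR (k + 2) * sum_f_R0 (fun i => Binomial.C (k + 2) i * bernp i) k.
Proof.
  unfold bernp at 1. simpl bernp_list. rewrite app_nth2; rewrite bl_len; [|lia].
  rewrite Nat.sub_diag. simpl nth. f_equal. f_equal.
  apply sum_eq. intros i Hi. rewrite bl_nth by lia. reflexivity.
Qed.

Lemma C_fact n k : (k <= n)%nat ->
  Binomial.C n k = INR (fact n) / (INR (fact k) * INR (fact (n - k))).
Proof. reflexivity. Qed.

Lemma C_last k : Binomial.C (k + 2) (S k) = INR (k + 2).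
Proof.
  rewrite C_fact by lia. replace (k + 2 - S k)%nat with 1%nat by lia.
  replace (k + 2)%nat with (S (S k)) by lia. rewrite fact_simpl. rewrite mult_INR. change (fact 1) with 1%nat. change (INR 1) with 1.
  field. apply INR_fact_neq_0.
Qed.

Lemma brec q : sum_f_R0 (fun l => Binomial.C (S q) l * bernp l) q = INR (S q).
Proof.
  destruct q.
  - simpl. unfold bernp. simpl. unfold Binomial.C. simpl. field.
  - rewrite tech5. rewrite bernp_S.
    replace (S (S q)) with (q + 2)%nat by lia. rewrite C_last.
    field. rewrite plus_INR. simpl. pose proof (pos_INR q). lra.
Qed.

Lemma sum_scal_l c (f : nat -> R) n : sum_f_R0 (fun i => c * f i) n = c * sum_f_R0 f n.
Proof. induction n; simpl; [ring|rewrite IHn; ring]. Qed.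

Lemma trunc_sum (g : nat -> R) j n : (j <= n)%nat ->
  sum_f_R0 (fun k => if Nat.leb k j then g k else 0) n = sum_f_R0 g j.
Proof.
  induction n; intros H.
  - replace j with 0%nat by lia. simpl. reflexivity.
  - destruct (Nat.eq_dec j (S n)) as [->|Hne].
    + apply sum_eq. intros i Hi. rewrite (proj2 (Nat.leb_le i (S n))) by lia. reflexivity.
    + rewrite tech5, IHn by lia. rewrite (proj2 (Nat.leb_gt (S n) j)) by lia. ring.
Qed.

Lemma binom_diff x q : (x + 1) ^ (S q) - x ^ (S q) = sum_f_R0 (fun k => Binomial.C (S q) k * x ^ k) q.
Proof.
  rewrite binomial, tech5. rewrite Nat.sub_diag.
  assert (Hc : Binomial.C (S q) (S q) = 1).
  { unfold Binomial.C. rewrite Nat.sub_diag. simpl (fact 0). simpl (INR 1). field. apply INR_fact_neq_0. }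
  rewrite Hc. simpl (1 ^ 0).
  assert (E : sum_f_R0 (fun i => Binomial.C (S q) i * x ^ i * 1 ^ (S q - i)) q =
              sum_f_R0 (fun k => Binomial.C (S q) k * x ^ k) q).
  { apply sum_eq. intros. rewrite pow1. ring. }
  rewrite E. ring.
Qed.

Lemma C_swap N l k : (l + k <= N)%nat ->
  Binomial.C N l * Binomial.C (N - l) k = Binomial.C N k * Binomial.C (N - k) l.
Proof.
  intros H. rewrite !C_fact by lia.
  replace (N - l - k)%nat with (N - k - l)%nat by lia.
  field. repeat split; apply INR_fact_neq_0.
Qed.

Lemma C_mulsub p k : (k <= p)%nat ->
  Binomial.C (S p) k * INR (S p - k) = INR (S p) * Binomial.C p k.
Proof.
  intros H. rewrite !C_fact by lia.
  replace (S p - k)%nat with (S (p - k)) by lia.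
  rewrite !fact_simpl, !mult_INR.
  field. split; [apply INR_fact_neq_0|]. split; [apply INR_fact_neq_0|].
  apply not_0_INR; lia.
Qed.

Definition Qf p x := sum_f_R0 (fun l => Binomial.C (S p) l * bernp l * x ^ (S p - l)) p.

Lemma sum_switch (u : nat -> nat -> R) n :
  sum_f_R0 (fun i => sum_f_R0 (u i) n) n = sum_f_R0 (fun j => sum_f_R0 (fun i => u i j) n) n.
Proof.
  assert (E1 : forall v : nat -> nat -> R,
    @Coquelicot.Hierarchy.sum_n R_AbelianMonoid (fun i => @Coquelicot.Hierarchy.sum_n R_AbelianMonoid (v i) n) n
    = sum_f_R0 (fun i => sum_f_R0 (v i) n) n).
  { intros v. rewrite Coquelicot.Hierarchy.sum_n_Reals. apply sum_eq; intros; apply Coquelicot.Hierarchy.sum_n_Reals. }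
  pose proof (@Coquelicot.Hierarchy.sum_n_switch R_AbelianMonoid u n n) as H.
  rewrite (E1 u), (E1 (fun j i => u i j)) in H. exact H.
Qed.

Lemma Qdiff p x : Qf p (x + 1) - Qf p x = INR (S p) * (x + 1) ^ p.
Proof.
  unfold Qf. rewrite <- minus_sum.
  rewrite (sum_eq _ (fun l => sum_f_R0 (fun k => if Nat.leb k (p - l) then
             Binomial.C (S p) l * bernp l * (Binomial.C (S p - l) k * x ^ k) else 0) p)).
  2:{ intros l Hl. rewrite trunc_sum by lia.
      replace (S p - l)%nat with (S (p - l)) by lia.
      rewrite <- Rmult_minus_distr_l, binom_diff, scal_sum.
      apply sum_eq; intros; ring. }
  rewrite sum_switch.
  rewrite (sum_eq _ (fun k => INR (S p) * Binomial.C p k * x ^ k)).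
  - rewrite binomial. rewrite scal_sum. apply sum_eq. intros. rewrite pow1. ring.
  - intros k Hk.
    rewrite (sum_eq _ (fun l => if Nat.leb l (p - k) then
               Binomial.C (S p) k * x ^ k * (Binomial.C (S (p - k)) l * bernp l) else 0)).
    + rewrite trunc_sum by lia. rewrite sum_scal_l.
      rewrite brec. rewrite Rmult_assoc, (Rmult_comm (x ^ k)), <- Rmult_assoc.
      replace (S (p - k)) with (S p - k)%nat by lia. rewrite C_mulsub by lia. ring.
    + intros l Hl.
      destruct (Nat.leb k (p - l)) eqn:E1; destruct (Nat.leb l (p - k)) eqn:E2;
        try reflexivity.
      * apply Nat.leb_le in E1.
        replace (S (p - k)) with (S p - k)%nat by lia.
        pose proof (C_swap (S p) l k ltac:(lia)) as HC.
        transitivity ((Binomial.C (S p) l * Binomial.C (S p - l) k) * bernp l * x ^ k); [ring|].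
        rewrite HC. ring.
      * apply Nat.leb_le in E1. apply Nat.leb_gt in E2. lia.
      * apply Nat.leb_gt in E1. apply Nat.leb_le in E2. lia.
Qed.

Lemma Qzero p : Qf p 0 = 0.
Proof.
  unfold Qf. rewrite (sum_eq _ (fun _ => 0)). rewrite sum_cte; ring.
  intros l Hl. replace (S p - l)%nat with (S (p - l)) by lia. simpl. ring.
Qed.

Lemma faulhaber p n : Hgen (- Z.of_nat p) n = / INR (S p) * Qf p (INR n).
Proof.
  induction n.
  - simpl INR. rewrite Qzero. unfold Hgen. simpl. ring.
  - unfold Hgen in *. rewrite sum1_S, IHn. rewrite Z.opp_involutive, <- pow_powerRZ.
    pose proof (Qdiff p (INR n)).
    replace (INR (S n)) with (INR n + 1) by (rewrite S_INR; ring).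
    replace (Qf p (INR n + 1)) with (Qf p (INR n) + INR (S p) * (INR n + 1) ^ p) by lra.
    field. apply not_0_INR; lia.
Qed.


Lemma part2 (p m r : nat) : (1 <= m)%nat -> (1 <= r)%nat -> (p + 1 <= m)%nat ->
    is_series (S_term (- Z.of_nat p) m 1 r)
      (/ INR (p + 1) *
       sum_f_R0 (fun l =>
         Binomial.C (p + 1) l * bernp l *
         (sum1 (m - p - 1 + l)
            (fun i => (-1) ^ (m - p - 1 + l - i) / (INR r) ^ (m - p + l - i) * zetabar i)
          + (-1) ^ (m - p - 1 + l + r) / (INR r) ^ (m - p - 1 + l)
              * (zetabar 1 - Hbar 1 r))) p).
Proof.
  intros Hm Hr Hpm.
  replace (p + 1)%nat with (S p) by lia.
  apply (iss_ext (fun k => / INR (S p) *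
     sum_f_R0 (fun l => Binomial.C (S p) l * bernp l *
        ((-1) ^ k / (INR (S k) ^ (m - p - 1 + l) * INR (S k + r)))) p)).
  - intros k. unfold S_term. rewrite faulhaber. unfold Qf. rewrite pow_1.
    rewrite <- !sum_scal_l.
    unfold Rdiv. rewrite Rmult_comm. rewrite <- sum_scal_l.
    apply sum_eq. intros l Hl.
    replace (INR (S k) ^ m) with (INR (S k) ^ (S p - l) * INR (S k) ^ (m - p - 1 + l))
      by (rewrite <- pow_add; f_equal; lia).
    pose proof (INRS_pos k). assert (0 < INR (S k + r)) by (apply lt_0_INR; lia).
    field. repeat split; try apply pow_nonzero; try (apply not_0_INR; lia); lra.
  - eapply iss_eq. apply iss_scal. apply iss_sumf. intros l Hl.
    apply iss_scal. apply Gser. exact Hr.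
    f_equal. apply sum_eq. intros l Hl. f_equal.
    f_equal.
    + apply sum1_ext. intros i Hi. f_equal. f_equal. f_equal. lia.
    + rewrite (pow_add (-1) (m - p - 1 + l) r). unfold Rdiv. ring.
Qed.

Theorem lemma4 :
  (forall p m r : nat, (1 <= p)%nat -> (1 <= m)%nat -> (1 <= r)%nat ->
    is_series (S_term (Z.of_nat p) m 1 r)
      (sum1 m (fun i => (-1) ^ (m - i) / (INR r) ^ (m - i + 1) * Spm p i)
       + (-1) ^ (m + r) / (INR r) ^ m * Spm p 1
       + (-1) ^ (m + r - 1) / (INR r) ^ m * zetabar (p + 1)
       + (-1) ^ m / (INR r) ^ m *
           (sum1 p (fun j => (-1) ^ (p - j + r) * zetabar j * Hbar (p - j + 1) (r - 1))
            + (-1) ^ (p + r - 1) * zetabar 1 * Hgen (Z.of_nat p) (r - 1))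
       + (-1) ^ (m + p + r) / (INR r) ^ m *
           sum1 (r - 1) (fun n => Hbar 1 n / (INR n) ^ p)))
  /\
  (forall p m r : nat, (1 <= m)%nat -> (1 <= r)%nat -> (p + 1 <= m)%nat ->
    is_series (S_term (- Z.of_nat p) m 1 r)
      (/ INR (p + 1) *
       sum_f_R0 (fun l =>
         Binomial.C (p + 1) l * bernp l *
         (sum1 (m - p - 1 + l)
            (fun i => (-1) ^ (m - p - 1 + l - i) / (INR r) ^ (m - p + l - i) * zetabar i)
          + (-1) ^ (m - p - 1 + l + r) / (INR r) ^ (m - p - 1 + l)
              * (zetabar 1 - Hbar 1 r))) p)).
Proof.
  split.
  - intros p m r Hp Hm Hr. apply part1; auto.
  - intros p m r Hm Hr Hpm. apply part2; auto.
Qed.
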